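(* Let $K$ be a non-archimedean local field with normalized valuation $v$ and absolute value $|x|=q^{-v(x)}$, $q$ the cardinality of the residue field. Let $V$ be an $n$-dimensional $K$-vector space with basis $v_1,\dots,v_n$, $\underline n=\{1,\dots,n\}$, and let $N$ be the normalizer in $PGL(V)$ of the image $T$ of the diagonal matrices. Let $\overline{A}$, with its topology and $N$-action, and $\mathcal{S}_c$ and $\varphi$ be as in the context. Then the map $\varphi:\overline{A}\to\mathcal{S}_c$ is an $N$-equivariant homeomorphism.
   Context: A seminorm on $V$ is a map $\gamma:V\to\mathbb{R}_{\ge0}$, not identically zero, with $\gamma(\lambda x)=|\lambda|\gamma(x)$ and $\gamma(x+y)\le\max\{\gamma(x),\gamma(y)\}$. It is canonical with respect to a basis $w_1,\dots,w_n$ if $\gamma(\sum\lambda_iw_i)=\max_i|\lambda_i|\gamma(w_i)$. Two seminorms are equivalent if they differ by a positive real constant factor. $\mathcal{S}'_c$ is the set of seminorms canonical with respect to $v_1,\dots,v_n$, with the topology of pointwise convergence (coarsest topology making $\gamma\mapsto\gamma(x)$ continuous for each $x\in V$), and $\mathcal{S}_c$ is its quotient by equivalence, with the quotient topology. $N$ acts on $\mathcal{S}_c$ by $\gamma\mapsto\gamma\circ n^{-1}$. For each nonempty $I\subseteq\underline{n}$ let $A_I$ be the real vector space generated by $\overline{\eta}^I_i$ ($i\in I$) subject to $\sum_{i\in I}\overline{\eta}^I_i=0$; $A=A_{\underline n}$, $\eta_i=\overline\eta_i^{\underline n}$; $s_I:A\to A_I$ linear with $\eta_i\mapsto\overline{\eta}^I_i$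 for $i\in I$ and $\eta_i\mapsto0$ for $i\notin I$. $\overline{A}$ is the disjoint union of all $A_I$. $N=T\rtimes W$ with $W$ the permutation matrices ($w(v_i)=v_{w(i)}$); $t\in T$ induced by $\mathrm{diag}(d_1,\dots,d_n)$ acts on $A_I$ by translation by $\sum_{i\in I}-v(d_i)\overline{\eta}^I_i$, and $w\in W$ acts by the linear maps $A_I\to A_{w(I)}$, $\overline\eta^I_i\mapsto\overline\eta^{w(I)}_{w(i)}$. Topology on $\overline A$: for nonempty $I\subset\underline{n}$ (strict) let $\Delta_I=\sum_{i\notin I}\mathbb{R}_{\ge0}\eta_i$ and for $U\subset A$ open bounded let $\Gamma^I_U=(U+\Delta_I)\cup\bigcup_{I\subseteq J\subset\underline n,\,J\neq\underline n}s_J(U+\Delta_I)$; a base of the topology consists of the open subsets of $A$ and all $\Gamma^I_U$. The map $\varphi$: for $x=\sum_{i\in I}x_i\overline{\eta}^I_i\in A_I$, $\varphi(x)$ is the class of the seminorm $\gamma(\lambda_1v_1+\dots+\lambda_nv_n)=\max\{|\lambda_i|q^{-x_i}: i\in I\}$ (well defined and bijective $\overline A\to\mathcal S_c$). *)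

(* Defs.v *)
From HB Require Import structures.
From mathcomp Require Import all_boot all_order all_algebra all_fingroup.
From mathcomp Require Import all_classical all_reals all_analysis.
Set Implicit Arguments. Unset Strict Implicit. Unset Printing Implicit Defensive.
Import Order.TTheory GRing.Theory Num.Theory numFieldNormedType.Exports.
Local Open Scope ring_scope.
Local Open Scope classical_set_scope.

Section Defs.
Variables (R : realType) (K : fieldType) (v : K -> int) (q : nat).

Definition absv (x : K) : R := if x == 0 then 0 else (q%:R : R) ^ (- v x).

Definition inO (x : K) : Prop := x = 0 \/ (0 <= v x)%R.
Definition inM (x : K) : Prop := x = 0 \/ (1 <= v x)%R.

(* K is a non-archimedean local field with normalized valuation v and residue
   field of cardinality q:
   - v is a discrete valuation on K^x (multiplicative, ultrametric),
   - v is normalized (surjective onto Z: some uniformizer has valuation 1),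
   - the residue field O/m has exactly q elements,
   - K is complete for |.|. *)
Definition nonarch_local_field : Prop :=
  [/\ (forall x y, x != 0 -> y != 0 -> v (x * y) = v x + v y),
      (forall x y, x != 0 -> y != 0 -> x + y != 0 ->
          (Num.min (v x) (v y) <= v (x + y))%R),
      (exists pi : K, pi != 0 /\ v pi = 1),
      (exists r : 'I_q -> K,
          [/\ forall i, inO (r i),
              forall i j, inM (r i - r j) -> i = j &
              forall x, inO x -> exists i, inM (x - r i)]) &
      (forall u : nat -> K,
          (forall e : R, 0 < e -> exists N : nat, forall m k : nat,
              (N <= m)%N -> (N <= k)%N -> absv (u m - u k) < e) ->
          exists l : K, forall e : R, 0 < e -> exists N : nat, forall m : nat,
              (N <= m)%N -> absv (u m - l) < e)].

Variable n : nat.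

Definition bas (i : 'I_n) : 'cV[K]_n := delta_mx i 0.

Definition seminorm (g : 'cV[K]_n -> R) : Prop :=
  [/\ exists x, g x != 0,
      forall x, 0 <= g x,
      forall (l : K) x, g (l *: x) = absv l * g x &
      forall x y, g (x + y) <= Num.max (g x) (g y)].

Definition canonical_seminorm (g : 'cV[K]_n -> R) : Prop :=
  forall lam : 'I_n -> K,
    g (\sum_(i < n) lam i *: bas i) =
    \big[Num.max/0]_(i < n) (absv (lam i) * g (bas i)).

Definition Scp : set ('cV[K]_n -> R) :=
  [set g | seminorm g /\ canonical_seminorm g].

Definition sn_equiv (g g' : 'cV[K]_n -> R) : Prop :=
  exists c : R, 0 < c /\ forall x, g' x = c * g x.

Definition cls (g : 'cV[K]_n -> R) : set ('cV[K]_n -> R) := [set g' | sn_equiv g g'].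

Definition Sc : set (set ('cV[K]_n -> R)) :=
  [set C | exists g, Scp g /\ C = cls g].

(* topology of pointwise convergence on S'_c: the initial topology of the
   evaluations g |-> g x, i.e. generated by the subbasis {g | g x \in O},
   O open in R: a set is open iff around each of its points it contains a
   finite intersection of subbasic sets containing that point. *)
Definition open_Scp (U : set ('cV[K]_n -> R)) : Prop :=
  U `<=` Scp /\
  forall g, U g -> exists (k : nat) (xs : 'I_k -> 'cV[K]_n) (Os : 'I_k -> set R),
    (forall j, open (Os j) /\ Os j (g (xs j))) /\
    (forall g', Scp g' -> (forall j, Os j (g' (xs j))) -> U g').

Definition open_Sc (W : set (set ('cV[K]_n -> R))) : Prop :=
  W `<=` Sc /\ open_Scp [set g | Scp g /\ W (cls g)].

(* A point of A_I (I nonempty) is represented by its unique coordinate vector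
   x with x_i = 0 for i \notin I and sum_{i in I} x_i = 0: the element
   sum_{i in I} x_i eta^I_i.  [nrm I y] is the representative of
   sum_{i in I} y_i eta^I_i for arbitrary coordinates y. *)
Definition nrm (I : {set 'I_n}) (y : 'I_n -> R) : 'I_n -> R :=
  fun i => if i \in I then y i - (\sum_(j in I) y j) / (#|I|%:R) else 0.

Definition Abar : set ({set 'I_n} * ('I_n -> R)) :=
  [set p : {set 'I_n} * ('I_n -> R) | p.1 != (finset.set0 : {set 'I_n}) /\ p.2 = nrm p.1 p.2].

Definition Apts : set ({set 'I_n} * ('I_n -> R)) :=
  [set p : {set 'I_n} * ('I_n -> R) | Abar p /\ p.1 = [set: 'I_n]%SET].

Definition openA (U : set ({set 'I_n} * ('I_n -> R))) : Prop :=
  U `<=` Apts /\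
  forall p, U p -> exists e : R, 0 < e /\
    forall p', Apts p' -> (forall i, `|p'.2 i - p.2 i| < e) -> U p'.

Definition boundedA (U : set ({set 'I_n} * ('I_n -> R))) : Prop :=
  exists M : R, forall p, U p -> forall i, `|p.2 i| <= M.

(* Gamma^I_U = (U + Delta_I) \cup \bigcup_{I <= J strict} s_J(U + Delta_I):
   the points s_J(u + sum_{i \notin I} t_i eta_i), t_i >= 0, u \in U, with
   J = \underline n giving U + Delta_I itself. *)
Definition Gamma (I : {set 'I_n}) (U : set ({set 'I_n} * ('I_n -> R))) :
    set ({set 'I_n} * ('I_n -> R)) :=
  [set p : {set 'I_n} * ('I_n -> R) | Abar p /\ exists J : {set 'I_n},
     [/\ I \subset J, p.1 = J &
       exists u, U u /\ exists t : 'I_n -> R,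
         [/\ forall i, 0 <= t i, forall i, i \in I -> t i = 0 &
             p.2 = nrm J (fun i => u.2 i + t i)]]].

Definition baseAbar (B : set ({set 'I_n} * ('I_n -> R))) : Prop :=
  openA B \/ exists (I : {set 'I_n}) U,
    [/\ I != (finset.set0 : {set 'I_n}), I != [set: 'I_n]%SET, openA U, boundedA U & B = Gamma I U].

Definition open_Abar (W : set ({set 'I_n} * ('I_n -> R))) : Prop :=
  W `<=` Abar /\
  forall p, W p -> exists B, baseAbar B /\ B p /\ B `<=` W.

Definition gam (p : {set 'I_n} * ('I_n -> R)) : 'cV[K]_n -> R :=
  fun x => \big[Num.max/0]_(i in p.1) (absv (x i 0) * (q%:R : R) `^ (- p.2 i)).

Definition phi (p : {set 'I_n} * ('I_n -> R)) : set ('cV[K]_n -> R) := cls (gam p).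

(* element t w of N, t induced by diag(d), w the permutation matrix with
   w(v_i) = v_{s(i)} *)
Definition Nmx (d : 'rV[K]_n) (s : 'S_n) : 'M[K]_n :=
  diag_mx d *m (perm_mx s)^T.

Definition actS (d : 'rV[K]_n) (s : 'S_n) (C : set ('cV[K]_n -> R)) :
    set ('cV[K]_n -> R) :=
  [set (fun x => g (invmx (Nmx d s) *m x)) | g in C].

(* action on Abar: first w (A_I -> A_{w(I)}, eta_i |-> eta_{w(i)}), then
   t (translation by sum_{i in w(I)} -v(d_i) eta_i) *)
Definition actA (d : 'rV[K]_n) (s : 'S_n) (p : {set 'I_n} * ('I_n -> R)) :
    {set 'I_n} * ('I_n -> R) :=
  let I' := s @: p.1 in
  (I', nrm I' (fun j => p.2 ((s^-1)%g j) - (v (d 0 j))%:~R)).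

End Defs.

(* Main.v *)
Require Import Defs.
From HB Require Import structures.
From mathcomp Require Import all_boot all_order all_algebra all_fingroup.
From mathcomp Require Import all_classical all_reals all_analysis.
From mathcomp Require Import zify ring lra.
Import Order.TTheory GRing.Theory Num.Theory numFieldNormedType.Exports.
Local Open Scope ring_scope.
Local Open Scope classical_set_scope.

Section Basic.
Variables (R : realType) (K : fieldType) (v : K -> int) (q : nat).
Hypothesis HL : nonarch_local_field R v q.

Lemma vmul x y : x != 0 -> y != 0 -> v (x * y) = v x + v y.
Proof. by move: HL; rewrite /nonarch_local_field => -[h1 *]; exact: h1. Qed.

Lemma vult x y : x != 0 -> y != 0 -> x + y != 0 -> Num.min (v x) (v y) <= v (x + y).
Proof. by move: HL; rewrite /nonarch_local_field => -[_ h2 *]; exact: h2. Qed.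

Lemma v1 : v 1 = 0.
Proof.
have := @vmul 1 1 (oner_neq0 K) (oner_neq0 K); rewrite mulr1 => h; lia.
Qed.

Lemma vN1 : v (-1) = 0.
Proof.
have h1 : (-1 : K) != 0 by rewrite oppr_eq0 oner_neq0.
have := @vmul _ _ h1 h1; rewrite mulrNN mulr1 v1 => h; lia.
Qed.

Lemma vN x : x != 0 -> v (- x) = v x.
Proof.
move=> x0; rewrite -mulN1r vmul ?vN1 ?add0r // oppr_eq0 oner_neq0 //.
Qed.

Lemma q_gt1 : (1 < q)%N.
Proof.
move: HL; rewrite /nonarch_local_field => -[_ _ _ [r [rO rinj rsurj]] _].
have [i hi] : exists i, inM v (0 - r i) by apply: rsurj; left.
have [j hj] : exists j, inM v (1 - r j) by apply: rsurj; right; rewrite v1.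
rewrite ltnNge; apply/negP => hq.
have ij : i = j by apply: ord_inj; move: (ltn_ord i) (ltn_ord j) hq; lia.
subst j; move: hi hj; set a := r i => hi hj.
have [a0|a0] := eqVneq a 0.
  move: hj; rewrite a0 subr0 /inM v1 => -[/eqP|]; first by rewrite oner_eq0.
  by [].
have va : 1 <= v a.
  move: hi; rewrite sub0r /inM vN // => -[/eqP|//]; by rewrite oppr_eq0 (negPf a0).
have [b0|b0] := eqVneq (1 - a) 0.
  move: b0 => /eqP; rewrite subr_eq0 => /eqP ha; move: va; by rewrite -ha v1.
have vb : 1 <= v (1 - a) by case: hj => // /eqP; rewrite (negPf b0).
have := @vult _ _ b0 a0; rewrite subrK v1 oner_neq0 => /(_ isT).
rewrite ge_min; move/orP => -[h|h]; [move: (le_trans vb h)|move: (le_trans va h)]; by [].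
Qed.

Definition qR : R := q%:R.
Lemma qR_gt1 : 1 < qR.
Proof. by rewrite /qR ltr1n q_gt1. Qed.
Lemma qR_gt0 : 0 < qR.
Proof. exact: lt_trans ltr01 qR_gt1. Qed.
Definition lq : R := ln qR.
Lemma lq_gt0 : 0 < lq.
Proof. exact: ln_gt0 qR_gt1. Qed.

Definition E (r : R) : R := qR `^ (- r).
Lemma E_exp r : E r = expR (- r * lq).
Proof. by rewrite /E /powR gt_eqF ?qR_gt0. Qed.
Lemma E_gt0 r : 0 < E r.
Proof. by rewrite E_exp expR_gt0. Qed.
Lemma E_ge0 r : 0 <= E r.
Proof. exact: ltW (E_gt0 r). Qed.
Lemma E_D a b : E (a + b) = E a * E b.
Proof. by rewrite !E_exp -expRD opprD mulrDl. Qed.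
Lemma E0 : E 0 = 1.
Proof. by rewrite E_exp oppr0 mul0r expR0. Qed.
Lemma E_lt a b : (E a < E b) = (b < a).
Proof.
rewrite !E_exp ltr_expR ltr_pM2r ?lq_gt0 //; by rewrite ltrN2.
Qed.
Lemma E_le a b : (E a <= E b) = (b <= a).
Proof.
rewrite !E_exp ler_expR ler_pM2r ?lq_gt0 //; by rewrite lerN2.
Qed.
Lemma E_inj a b : E a = E b -> a = b.
Proof. by move=> h; apply/eqP; rewrite eq_le -(E_le b a) -(E_le a b) h lexx. Qed.
Definition L (w : R) : R := - ln w / lq.
Lemma EL w : 0 < w -> E (L w) = w.
Proof.
move=> w0; rewrite E_exp /L mulNr divfK; last exact: lt0r_neq0 lq_gt0.
by rewrite opprK lnK // posrE.
Qed.
Lemma LE r : L (E r) = r.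
Proof. by apply: E_inj; rewrite EL ?E_gt0. Qed.

Notation av := (absv R v q).
Lemma absv0 : av 0 = 0.
Proof. by rewrite /absv eqxx. Qed.
Lemma absvE x : x != 0 -> av x = E (v x)%:~R.
Proof.
by move=> x0; rewrite /absv (negPf x0) /E -intrN powR_intmul // ltW ?qR_gt0.
Qed.
Lemma absv_ge0 x : 0 <= av x.
Proof. by have [->|x0] := eqVneq x 0; rewrite ?absv0 ?absvE ?E_ge0. Qed.
Lemma absv_gt0 x : x != 0 -> 0 < av x.
Proof. by move=> x0; rewrite absvE ?E_gt0. Qed.
Lemma absv1 : av 1 = 1.
Proof. by rewrite absvE ?oner_neq0 // v1 E0. Qed.
Lemma absvM x y : av (x * y) = av x * av y.
Proof.
have [->|x0] := eqVneq x 0; first by rewrite mul0r absv0 mul0r.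
have [->|y0] := eqVneq y 0; first by rewrite mulr0 absv0 mulr0.
by rewrite !absvE ?mulf_neq0 // vmul // intrD E_D.
Qed.
Lemma absvN x : av (- x) = av x.
Proof.
have [->|x0] := eqVneq x 0; first by rewrite oppr0.
by rewrite !absvE ?oppr_eq0 // vN.
Qed.
Lemma absv_ult x y : av (x + y) <= Num.max (av x) (av y).
Proof.
have [->|x0] := eqVneq x 0; first by rewrite add0r absv0 le_max lexx orbT.
have [->|y0] := eqVneq y 0; first by rewrite addr0 absv0 le_max lexx.
have [->|s0] := eqVneq (x + y) 0; first by rewrite absv0 le_max absv_ge0.
rewrite !absvE //; have := @vult _ _ x0 y0 s0; rewrite ge_min le_max.
by rewrite !E_le !ler_int.
Qed.
Lemma absvV x : x != 0 -> av x^-1 = E (- (v x)%:~R).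
Proof.
move=> x0; apply: (@mulfI _ (av x)); first by rewrite gt_eqF ?absv_gt0.
by rewrite -absvM mulfV // absv1 absvE // -E_D subrr E0.
Qed.

Variable n : nat.
Implicit Types (J : {set 'I_n}) (z y : 'I_n -> R) (x : 'cV[K]_n) (g : 'cV[K]_n -> R) (p : {set 'I_n} * ('I_n -> R)).

Definition G (J : {set 'I_n}) (z : 'I_n -> R) : 'cV[K]_n -> R :=
  fun x => \big[Num.max/0]_(i in J) (av (x i 0) * E (z i)).

Lemma gamE p : gam v q p = G p.1 p.2.
Proof. by []. Qed.

Lemma term_ge0 (x : 'cV[K]_n) z i : 0 <= av (x i 0) * E (z i).
Proof. by rewrite mulr_ge0 ?absv_ge0 ?E_ge0. Qed.

Lemma G_ge0 J z x : 0 <= G J z x.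
Proof. exact: bigmax_ge_id. Qed.

Lemma G_le J z x c : 0 <= c -> (forall i, i \in J -> av (x i 0) * E (z i) <= c) ->
  G J z x <= c.
Proof. by move=> c0 h; apply: bigmax_le. Qed.

Lemma le_G J z x i : i \in J -> av (x i 0) * E (z i) <= G J z x.
Proof. by move=> iJ; apply: (le_bigmax_cond _ (fun i => av (x i 0) * E (z i)) iJ). Qed.

Lemma bigmaxM (I : finType) (P : pred I) (F : I -> R) c : 0 <= c ->
  c * \big[Num.max/0]_(i | P i) F i = \big[Num.max/0]_(i | P i) (c * F i).
Proof.
move=> c0; elim/big_rec2: _ => [|i a b _ <-]; first by rewrite mulr0.
by rewrite maxr_pMr.
Qed.

Lemma G_shift J z c x : G J (fun i => z i + c) x = E c * G J z x.
Proof.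
rewrite /G bigmaxM ?E_ge0 //; apply: eq_bigr => i _.
by rewrite E_D mulrA mulrC.
Qed.

Lemma G_eq_on J z z' : (forall i, i \in J -> z i = z' i) -> G J z = G J z'.
Proof. by move=> h; apply: funext => x; apply: eq_bigr => i /h ->. Qed.

Lemma bas_coef (i j : 'I_n) : bas K i j 0 = (j == i)%:R.
Proof. by rewrite /bas mxE eqxx andbT. Qed.

Lemma G_bas J z i : G J z (bas K i) = if i \in J then E (z i) else 0.
Proof.
apply/eqP; rewrite eq_le; apply/andP; split.
  apply: G_le; first by case: ifP => _ //; exact: E_ge0.
  move=> j jJ; rewrite bas_coef; have [ji|ji] := eqVneq j i.
    by rewrite -ji jJ /= mulr1n absv1 mul1r.
  by rewrite /= mulr0n absv0 mul0r; case: ifP => _ //; exact: E_ge0.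
case: ifP => iJ; last exact: G_ge0.
by have := @le_G _ z (bas K i) _ iJ; rewrite bas_coef eqxx /= mulr1n absv1 mul1r.
Qed.

Lemma sum_bas (x : 'cV[K]_n) : x = \sum_(i < n) x i 0 *: bas K i.
Proof.
rewrite {1}(matrix_sum_delta x); apply: eq_bigr => i _.
by rewrite big_ord1.
Qed.

Lemma Scp_G J z : J != finset.set0 -> Scp v q (G J z).
Proof.
case/set0Pn => i0 i0J; split; first split.
- exists (bas K i0); rewrite G_bas i0J; exact: lt0r_neq0 (E_gt0 _).
- by move=> x; apply: G_ge0.
- move=> l x; rewrite /G bigmaxM ?absv_ge0 //; apply: eq_bigr => i _.
  by rewrite mxE absvM mulrA.
- move=> x y; apply: G_le; first by rewrite le_max G_ge0.
  move=> i iJ; rewrite mxE; apply: le_trans (_ : Num.max (av (x i 0)) (av (y i 0)) * E (z i) <= _).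
    by rewrite ler_wpM2r ?E_ge0 ?absv_ult.
  rewrite maxr_pMl ?E_ge0 // ge_max !le_max !le_G // ?orbT //.
- move=> lam.
  have -> : \sum_(i < n) lam i *: bas K i = \col_i lam i.
    apply/matrixP => i j; rewrite ord1 summxE (bigD1 i) //= big1 ?addr0.
      by rewrite !mxE eqxx mulr1.
    by move=> k ki; rewrite !mxE eq_sym (negPf ki) mulr0.
  rewrite {1}/G; apply/eqP; rewrite eq_le; apply/andP; split.
    apply: bigmax_le => [|i iJ]; first exact: bigmax_ge_id.
    apply: (le_trans _ (le_bigmax _ (fun i => av (lam i) * G J z (bas K i)) i)).
    by rewrite G_bas iJ mxE.
  apply: bigmax_le => [|i _]; first exact: bigmax_ge_id.
  rewrite G_bas; case: ifP => iJ; last by rewrite mulr0 bigmax_ge_id.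
  by have := le_bigmax_cond 0 (fun i => av ((\col_i lam i : 'cV[K]_n) i 0) * E (z i)) iJ; rewrite mxE.
Qed.

Lemma cls_refl (g : 'cV[K]_n -> R) : cls g g.
Proof. by exists 1; split => // x; rewrite mul1r. Qed.

Lemma cls_scale (g g' : 'cV[K]_n -> R) c : 0 < c -> (forall x, g' x = c * g x) ->
  cls g' = cls g.
Proof.
move=> c0 h; apply/seteqP; split => f [d [d0 hd]].
  exists (d * c); split; first exact: mulr_gt0.
  by move=> x; rewrite hd h mulrA.
exists (d / c); split; first by rewrite divr_gt0.
by move=> x; rewrite hd h mulrA divfK // gt_eqF.
Qed.

Lemma cls_mem (g g' : 'cV[K]_n -> R) : cls g g' -> cls g' = cls g.
Proof. by case=> c [c0 h]; apply: cls_scale c0 h. Qed.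

Definition mean (J : {set 'I_n}) (y : 'I_n -> R) : R := (\sum_(j in J) y j) / #|J|%:R.

Lemma nrmE J y i : nrm J y i = if i \in J then y i - mean J y else 0.
Proof. by []. Qed.

Lemma nrm_shift J y c : nrm J (fun i => y i + c) = nrm J y.
Proof.
apply: funext => i; rewrite !nrmE; case: ifP => // iJ.
have cJ : #|J|%:R != 0 :> R by rewrite pnatr_eq0 -lt0n; apply/card_gt0P; exists i.
rewrite /mean big_split /= sumr_const mulrDl -[c *+ _]mulr_natr mulfK //.
by rewrite opprD addrACA subrr addr0.
Qed.

Lemma nrm_eq_on J y y' : (forall i, i \in J -> y i = y' i) -> nrm J y = nrm J y'.
Proof.
move=> h; apply: funext => i; rewrite !nrmE /mean.
rewrite (eq_bigr _ h); case: ifP => // /h -> //.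
Qed.

Lemma nrm_idem J y : nrm J (nrm J y) = nrm J y.
Proof.
rewrite -{2}(nrm_shift J y (- mean J y)); apply: nrm_eq_on => i iJ.
by rewrite nrmE iJ.
Qed.

Lemma cls_G_nrm J y : cls (G J (nrm J y)) = cls (G J y).
Proof.
apply: (@cls_scale _ _ (E (- mean J y))); first exact: E_gt0.
move=> x; rewrite -G_shift.
by rewrite (@G_eq_on J (nrm J y) (fun i => y i + - mean J y)) // => i iJ; rewrite nrmE iJ.
Qed.

Lemma phiE p : phi v q p = cls (G p.1 p.2).
Proof. by []. Qed.

Lemma Abar_out p i : Abar p -> i \notin p.1 -> p.2 i = 0.
Proof. by case=> _ h /negPf iJ; rewrite h nrmE iJ. Qed.

Lemma card_neq0 (J : {set 'I_n}) : J != finset.set0 -> #|J|%:R != 0 :> R.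
Proof. by move=> /set0Pn[i iJ]; rewrite pnatr_eq0 -lt0n; apply/card_gt0P; exists i. Qed.

Lemma Abar_sum p : Abar p -> \sum_(j in p.1) p.2 j = 0.
Proof.
case=> ne h; have /set0Pn[i iJ] := ne.
have : p.2 i = p.2 i - mean p.1 p.2 by rewrite {1}h nrmE iJ.
move/eqP; rewrite -subr_eq0 opprB addrC subrK /mean mulf_eq0 invr_eq0.
by rewrite (negPf (@card_neq0 _ ne)) orbF => /eqP.
Qed.

Lemma Sc_phi p : Abar p -> Sc v q (phi v q p).
Proof. by case=> ne _; exists (G p.1 p.2); split => //; exact: Scp_G. Qed.

Lemma phi_inj p p' : Abar p -> Abar p' -> phi v q p = phi v q p' -> p = p'.
Proof.
move=> Ap Ap' e.
have : cls (G p.1 p.2) (G p'.1 p'.2) by rewrite -!phiE e; exact: cls_refl.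
case=> c [c0 hc].
have hb i : (if i \in p'.1 then E (p'.2 i) else 0) = c * (if i \in p.1 then E (p.2 i) else 0).
  by rewrite -!G_bas hc.
have eJ : p'.1 = p.1.
  apply/setP => i; have := hb i.
  case: (i \in p'.1); case: (i \in p.1) => //; rewrite ?mulr0.
    by move=> h; have := E_gt0 (p'.2 i); rewrite h ltxx.
  by move=> /esym /eqP; rewrite mulf_eq0 gt_eqF // gt_eqF ?E_gt0.
have hy i : i \in p.1 -> p'.2 i = L c + p.2 i.
  move=> iJ; have := hb i; rewrite eJ iJ -{1}(@EL c c0) -E_D; exact: E_inj.
have Lc : L c = 0.
  have ne : p.1 != finset.set0 by case: Ap.
  have := @Abar_sum _ Ap'; rewrite eJ (eq_bigr _ hy) big_split /= (@Abar_sum _ Ap) addr0.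
  rewrite sumr_const => /eqP; rewrite -[L c *+ _]mulr_natr mulf_eq0 (negPf (@card_neq0 _ ne)) orbF.
  by move/eqP.
case: p p' Ap Ap' eJ hy {hb e hc} => [J y] [J' y'] Ap Ap' /= eJ hy; subst J'.
congr pair; apply: funext => i; have [iJ|iJ] := boolP (i \in J).
  by rewrite hy // Lc add0r.
by have := @Abar_out (J, y) i Ap iJ; have := @Abar_out (J, y') i Ap' iJ; move=> /= -> ->.
Qed.

Definition hJ (g : 'cV[K]_n -> R) : {set 'I_n} := [set i | g (bas K i) != 0].
Definition hy (g : 'cV[K]_n -> R) : 'I_n -> R := fun i => L (g (bas K i)).

Lemma Scp_hat g : Scp v q g -> g = G (hJ g) (hy g).
Proof.
case=> -[_ g0 _ _] gc; apply: funext => x.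
rewrite {1}(sum_bas x) gc; apply/eqP; rewrite eq_le; apply/andP; split.
  apply: bigmax_le => [|i _]; first exact: G_ge0.
  have [gi|gi] := eqVneq (g (bas K i)) 0; first by rewrite gi mulr0 G_ge0.
  have iJ : i \in hJ g by rewrite inE gi.
  by have := @le_G _ (hy g) x _ iJ; rewrite /hy EL // lt_def gi g0.
apply: G_le => [|i]; first exact: bigmax_ge_id.
rewrite inE => gi; rewrite /hy EL ?lt_def ?gi ?g0 //.
exact: (le_bigmax _ (fun i => av (x i 0) * g (bas K i)) i).
Qed.

Lemma hJ_ne g : Scp v q g -> hJ g != finset.set0.
Proof.
move=> sg; have [[[x gx] _ _ _] _] := sg; apply/negP => /eqP e.
move: gx; rewrite (@Scp_hat _ sg) e; apply/negP; rewrite negbK eq_le G_ge0 andbT.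
by apply: G_le => // i; rewrite inE.
Qed.

Definition psi (g : 'cV[K]_n -> R) : {set 'I_n} * ('I_n -> R) := (hJ g, nrm (hJ g) (hy g)).

Lemma psi_Abar g : Scp v q g -> Abar (psi g).
Proof. by move=> sg; split; [exact: hJ_ne | rewrite /= nrm_idem]. Qed.

Lemma phi_psi g : Scp v q g -> phi v q (psi g) = cls g.
Proof. by move=> sg; rewrite phiE cls_G_nrm -(@Scp_hat _ sg). Qed.


Lemma actS_cls (d : 'rV[K]_n) (s : 'S_n) g :
  actS d s (cls g) = cls (fun x => g (invmx (Nmx d s) *m x)).
Proof.
apply/seteqP; split => h.
  case=> g' [c [c0 hc]] <-; exists c; split => // x; by rewrite hc.
case=> c [c0 hc]; exists (fun w : 'cV[K]_n => c * g w); first by exists c.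
by apply: funext => x; rewrite hc.
Qed.

Definition Minv (d : 'rV[K]_n) (s : 'S_n) : 'M[K]_n :=
  perm_mx s *m diag_mx (\row_j (d 0 j)^-1).

Lemma Nmx_Minv (d : 'rV[K]_n) (s : 'S_n) : (forall j, d 0 j != 0) ->
  Nmx d s *m Minv d s = 1%:M.
Proof.
move=> d0; rewrite /Nmx /Minv mulmxA -(mulmxA (diag_mx d)) tr_perm_mx -perm_mxM mulVg perm_mx1.
rewrite mulmx1 mulmx_diag -diag_const_mx; congr diag_mx; apply/matrixP => i j.
by rewrite !mxE mulfV.
Qed.

Lemma invNmx (d : 'rV[K]_n) (s : 'S_n) : (forall j, d 0 j != 0) ->
  invmx (Nmx d s) = Minv d s.
Proof.
move=> d0; have h := @Nmx_Minv d s d0; have [u _] := mulmx1_unit h.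
by rewrite -(mulKmx u (Minv d s)) h mulmx1.
Qed.

Lemma invNmxE (d : 'rV[K]_n) (s : 'S_n) x j : (forall j, d 0 j != 0) ->
  (invmx (Nmx d s) *m x) j 0 = x (s j) 0 / d 0 (s j).
Proof.
move=> d0; rewrite invNmx // /Minv -mulmxA -row_permE mxE mul_diag_mx mxE mxE.
by rewrite mulrC.
Qed.

Lemma equiv (d : 'rV[K]_n) (s : 'S_n) p : (forall j, d 0 j != 0) -> Abar p ->
  phi v q (actA v d s p) = actS d s (phi v q p).
Proof.
move=> d0 Ap; rewrite phiE /actA /= cls_G_nrm phiE actS_cls; congr cls.
apply: funext => x; apply/eqP; rewrite eq_le; apply/andP; split.
  apply: G_le => [|j /imsetP[i iJ ->]]; first exact: G_ge0.
  apply: le_trans (@le_G _ _ (invmx (Nmx d s) *m x) _ iJ).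
  rewrite invNmxE // permK absvM absvV // -mulrA -E_D.
  by rewrite addrC.
apply: G_le => [|i iJ]; first exact: G_ge0.
have siJ : s i \in [set s x | x in p.1]%SET by rewrite mem_imset //; exact: perm_inj.
apply: le_trans (@le_G _ _ x _ siJ).
rewrite invNmxE // permK absvM absvV // -mulrA -E_D.
by rewrite addrC.
Qed.


Lemma E_near (eta : R) : 0 < eta -> exists2 d : R, 0 < d &
  forall a w : R, `|w - a| < d -> `|E w - E a| < eta * E a.
Proof.
move=> eta0; have lq0 := lq_gt0.
exists (ln (1 + eta) / lq); first by rewrite divr_gt0 // ln_gt0 // ltrDl.
move=> a w hz; set d := ln (1 + eta) / lq in hz.
have Ed1 : E (- d) = 1 + eta.
  rewrite E_exp opprK /d divfK ?gt_eqF // lnK // posrE; lra.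
have Ed2 : E d = (1 + eta)^-1.
  rewrite -Ed1; apply: (@mulfI _ (E (- d))); first exact: lt0r_neq0 (E_gt0 _).
  by rewrite -E_D addNr E0 mulfV // lt0r_neq0 // E_gt0.
have -> : E w = E a * E (w - a) by rewrite -E_D addrC subrK.
rewrite -{2}[E a]mulr1 -mulrBr normrM (ger0_norm (E_ge0 _)) mulrC ltr_pM2r ?E_gt0 //.
move: hz; rewrite ltr_norml => /andP[h1 h2].
have u1 : E (w - a) < 1 + eta by rewrite -Ed1 E_lt; lra.
have u2 : (1 + eta)^-1 < E (w - a) by rewrite -Ed2 E_lt.
have u3 : 1 - eta <= (1 + eta)^-1.
  rewrite -div1r ler_pdivlMr; last lra.
  nra.
rewrite ltr_norml; apply/andP; split; lra.
Qed.


Lemma E_small (eps : R) : 0 < eps -> exists M : R, forall w : R, M <= w -> E w < eps.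
Proof.
move=> e0; exists (L (eps / 2)) => w hw.
have h2 : 0 < eps / 2 by rewrite divr_gt0.
apply: (le_lt_trans (_ : E w <= E (L (eps / 2)))); first by rewrite E_le.
rewrite EL //; lra.
Qed.

Lemma G_close J J' z z0 x (eps : R) : 0 < eps -> J \subset J' ->
  (forall i, i \in J -> `|av (x i 0) * E (z i) - av (x i 0) * E (z0 i)| < eps) ->
  (forall i, i \in J' -> i \notin J -> av (x i 0) * E (z i) < eps) ->
  `|G J' z x - G J z0 x| < eps.
Proof.
move=> e0 sJ h1 h2; rewrite ltr_norml; apply/andP; split.
  suff : G J z0 x < G J' z x + eps by lra.
  apply: bigmax_lt => [|i iJ]; first by have := G_ge0 J' z x; lra.
  have := h1 i iJ; rewrite ltr_norml => /andP[a _].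
  have := @le_G J' z x i (fintype.subsetP sJ i iJ); lra.
suff : G J' z x < G J z0 x + eps by lra.
apply: bigmax_lt => [|i iJ']; first by have := G_ge0 J z0 x; lra.
have [iJ|iJ] := boolP (i \in J).
  have := h1 i iJ; rewrite ltr_norml => /andP[_ a].
  have := @le_G J z0 x i iJ; lra.
have := h2 i iJ' iJ; have := G_ge0 J z0 x; lra.
Qed.

Lemma nrm_close J (a b : 'I_n -> R) (d : R) : J != finset.set0 ->
  (forall j, j \in J -> `|a j - b j| < d) -> forall i, `|nrm J a i - nrm J b i| < d *+ 2.
Proof.
move=> ne h i; have /set0Pn[j0 j0J] := ne.
have d0 : 0 < d by apply: le_lt_trans (h j0 j0J).
rewrite !nrmE; case: ifP => iJ; last by rewrite subrr normr0 mulrn_wgt0.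
have hm : `|mean J a - mean J b| <= d.
  rewrite /mean -mulrBl -sumrB normrM normfV (ger0_norm (ler0n _ _)).
  have k0 : 0 < #|J|%:R :> R by rewrite ltr0n; apply/card_gt0P; exists j0.
  rewrite ler_pdivrMr //.
  apply: (le_trans (ler_norm_sum _ _ _)).
  apply: le_trans (_ : \sum_(j in J) d <= _); first by apply: ler_sum => j /h /ltW.
  by rewrite sumr_const mulr_natr.
have -> : a i - mean J a - (b i - mean J b) = (a i - b i) + (mean J b - mean J a) by ring.
have hi := h i iJ; apply: le_lt_trans (ler_normD _ _) _.
rewrite [`|mean J b - _|]distrC mulr2n; lra.
Qed.

Lemma open_ball (A : set R) (a : R) : open A -> A a ->
  exists2 e : R, 0 < e & forall b, `|b - a| < e -> A b.
Proof.
move=> oA Aa; have := oA a Aa; rewrite /= nbhs_ballP => -[e e0 he].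
exists e => // b hb; apply: he; rewrite /ball /= distrC //.
Qed.

Lemma open_oo (a b : R) : open [set r : R | a < r < b].
Proof.
have -> : [set r : R | a < r < b] = `]a, b[%classic.
  by apply/seteqP; split => r /=; rewrite in_itv.
exact: itv_open.
Qed.


Lemma cont_phi W : @open_Sc R K v q n W -> @open_Abar R n (@Abar R n `&` @phi R K v q n @^-1` W).
Proof.
move=> [WS [_ hS]]; split; first by move=> p [].
move=> p [Ap Wp]; have ne : p.1 != finset.set0 by case: Ap.
have Sg : Scp v q (G p.1 p.2) /\ W (cls (G p.1 p.2)) by split => //; exact: Scp_G.
have [k [xs [Os [hO hU]]]] := hS _ Sg.
have hr j : exists e : R, 0 < e /\ forall b, `|b - G p.1 p.2 (xs j)| < e -> Os j b.
  by have [e e0 he] := open_ball _ _ (hO j).1 (hO j).2; exists e.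
have [ef hef] := choice hr.
pose eps := \big[Num.min/1]_(j < k) ef j.
have eps0 : 0 < eps by apply: lt_bigmin => // j _; exact: (hef j).1.
have epsj j : eps <= ef j by apply: bigmin_le.
pose B := \big[Num.max/1]_(j < k) \big[Num.max/1]_(i < n) av (xs j i 0).
have hB j i : av (xs j i 0) <= B.
  apply: le_trans (le_bigmax 1 (fun i => av (xs j i 0)) i) _.
  exact: (le_bigmax 1 (fun j => \big[Num.max/1]_(i < n) av (xs j i 0)) j).
have B1 : 1 <= B by apply: bigmax_ge_id.
have B0 : 0 < B by apply: lt_le_trans B1.
pose Z := \big[Num.max/1]_(i < n) E (p.2 i).
have hZ i : E (p.2 i) <= Z by apply: (le_bigmax 1 (fun i => E (p.2 i)) i).
have Z0 : 0 < Z by apply: lt_le_trans (bigmax_ge_id _ _ _ _).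
pose eta := eps / B / Z.
have eta0 : 0 < eta by rewrite !divr_gt0.
have [dl dl0 hdl] := E_near _ eta0.
have [M hM] := E_small _ (divr_gt0 eps0 B0).
have Kc J' z : p.1 \subset J' -> (forall i, i \in p.1 -> `|z i - p.2 i| < dl) ->
    (forall i, i \in J' -> i \notin p.1 -> M <= z i) -> J' != finset.set0 ->
    W (cls (G J' z)).
  move=> sJ hz hzM ne'; have Sg' := @Scp_G J' z ne'.
  suff h : forall j, Os j (G J' z (xs j)) by exact: (hU _ Sg' h).2.
  move=> j; apply: (hef j).2; apply: lt_le_trans (epsj j).
  apply: G_close => // i iJ.
    rewrite -mulrBr normrM ger0_norm ?absv_ge0 //.
    apply: le_lt_trans (_ : B * `|E (z i) - E (p.2 i)| < _).
      by rewrite ler_wpM2r ?hB.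
    apply: lt_le_trans (_ : B * (eta * E (p.2 i)) <= _).
      by rewrite ltr_pM2l // hdl // hz.
    have -> : eps = B * (eta * Z) by rewrite /eta divfK ?gt_eqF // mulrC divfK ?gt_eqF.
    by rewrite ler_pM2l // ler_pM2l.
  move=> iJ'; apply: le_lt_trans (_ : B * E (z i) < _).
    by rewrite ler_wpM2r ?hB ?E_ge0.
  have -> : eps = B * (eps / B) by rewrite mulrC divfK ?gt_eqF.
  by rewrite ltr_pM2l // hM // hzM.
have [hT|hT] := eqVneq p.1 [set: 'I_n]%SET.
  pose B0' := [set p' : {set 'I_n} * ('I_n -> R) | Apts p' /\
     exists e : R, 0 < e /\ forall i, `|p'.2 i - p.2 i| < dl - e].
  exists B0'; split.
    left; split; first by move=> ? [].
    move=> p' [Ap' [e [e0 he]]]; exists (e / 2); split; first by rewrite divr_gt0.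
    move=> p'' Ap'' h; split => //; exists (e / 2); split; first by rewrite divr_gt0.
    move=> i; have := ler_distD (p'.2 i) (p''.2 i) (p.2 i); have := he i; have := h i; lra.
  split.
    split; first by split.
    exists (dl / 2); split; first by rewrite divr_gt0.
    by move=> i; rewrite subrr normr0; lra.
  move=> p' [[Ap' hT'] [e [e0 he]]]; split => //; rewrite /preimage /= phiE.
  apply: Kc.
  - by rewrite hT' finset.subsetT.
  - by move=> i _; have := he i; lra.
  - by move=> i _; rewrite hT inE.
  - by case: Ap'.
pose J := p.1.
pose y := fun i => if i \in J then p.2 i else M + dl.
pose u0 : {set 'I_n} * ('I_n -> R) := ([set: 'I_n]%SET, nrm [set: 'I_n]%SET y).
pose m0 := mean [set: 'I_n]%SET y.
have hu0 i : u0.2 i = y i - m0 by rewrite /= nrmE inE.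
have neT : [set: 'I_n]%SET != finset.set0.
  by have /set0Pn[i0 _] := ne; apply/set0Pn; exists i0; rewrite inE.
have Au0 : Apts u0 by split => //; split => //=; rewrite nrm_idem.
pose U := [set u : {set 'I_n} * ('I_n -> R) | Apts u /\ exists e : R, 0 < e /\ forall i, `|u.2 i - u0.2 i| < dl - e].
exists (Gamma J U); split.
  right; exists J, U; split => //.
    split; first by move=> ? [].
    move=> p' [Ap' [e [e0 he]]]; exists (e / 2); split; first by rewrite divr_gt0.
    move=> p'' Ap'' h; split => //; exists (e / 2); split; first by rewrite divr_gt0.
    move=> i; have := ler_distD (p'.2 i) (p''.2 i) (u0.2 i); have := he i; have := h i; lra.
  exists (\big[Num.max/0]_(i < n) `|u0.2 i| + dl) => u [Au [e [e0 he]]] i.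
  have := ler_normD (u.2 i - u0.2 i) (u0.2 i); rewrite subrK.
  have := le_bigmax 0 (fun i => `|u0.2 i|) i; have := he i; lra.
split.
  split => //; exists J; split => //.
  exists u0; split.
    split => //; exists (dl / 2); split; first by rewrite divr_gt0.
    by move=> i; rewrite subrr normr0; lra.
  exists (fun=> 0); split => //.
  case: Ap => _ h2; rewrite {1}h2.
  rewrite (@nrm_eq_on J p.2 y); last by move=> i iJ; rewrite /y iJ.
  rewrite -(nrm_shift J (fun i => u0.2 i + 0) m0); apply: nrm_eq_on => i iJ.
  by rewrite hu0 addr0 subrK.
move=> p' [Ap' [J' [sJ eJ' [u [[Au [e [e0 he]]] [t [t0 tJ e2]]]]]]].
split => //; rewrite /preimage /= phiE e2 eJ' cls_G_nrm.
pose z := fun i => u.2 i + t i + m0.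
rewrite -(@cls_scale (G J' (fun i => u.2 i + t i)) (G J' z) (E m0)); last 2 first.
- exact: E_gt0.
- by move=> x; rewrite /z G_shift.
apply: Kc.
- exact: sJ.
- move=> i iJ; rewrite /z tJ // addr0.
  have := hu0 i; rewrite /y iJ => h; have := he i; rewrite h.
  have -> : u.2 i + m0 - p.2 i = u.2 i - (p.2 i - m0) by ring.
  lra.
- move=> i iJ' iJ; rewrite /z; have := t0 i; have := hu0 i; rewrite /y (negPf iJ) => h.
  have := he i; rewrite h ltr_norml => /andP[h3 _]; lra.
- by rewrite -eJ'; case: Ap'.
Qed.


Lemma Scp_ge0 g x : Scp v q g -> 0 <= g x.
Proof. by case=> -[]. Qed.

Lemma hyE g i : Scp v q g -> i \in hJ g -> g (bas K i) = E (hy g i).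
Proof. by move=> sg; rewrite inE => gi; rewrite /hy EL // lt_def gi Scp_ge0. Qed.

Lemma nbhd_psi g (dl M : R) : Scp v q g -> 0 < dl ->
  exists Os : 'I_n -> set R,
   (forall i, open (Os i) /\ Os i (g (bas K i))) /\
   (forall g', Scp v q g' -> (forall i, Os i (g' (bas K i))) ->
     [/\ hJ g \subset hJ g',
         forall i, i \in hJ g -> `|hy g' i - hy g i| < dl &
         forall i, i \in hJ g' -> i \notin hJ g -> M < hy g' i]).
Proof.
move=> sg dl0.
exists (fun i => if i \in hJ g then [set r : R | E (hy g i + dl) < r < E (hy g i - dl)]
                 else [set r : R | -1 < r < E M]); split.
  move=> i; case: ifP => iJ; split; try exact: open_oo.
    by rewrite /= hyE // !E_lt; apply/andP; split; lra.
  move: iJ; rewrite inE => /negbFE/eqP ->; rewrite /= E_gt0 andbT; lra.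
move=> g' sg' hO.
have sJ : hJ g \subset hJ g'.
  apply/fintype.subsetP => i iJ; have := hO i; rewrite iJ /= => /andP[h _].
  by rewrite inE gt_eqF // (lt_trans (E_gt0 _) h).
split => //.
  move=> i iJ; have := hO i; rewrite iJ /= hyE //; last exact: (fintype.subsetP sJ).
  rewrite !E_lt => /andP[h1 h2]; rewrite ltr_norml; apply/andP; split; lra.
move=> i iJ' iJ; have := hO i; rewrite (negPf iJ) /= hyE // E_lt => /andP[_ //].
Qed.


Lemma open_phi W : @open_Abar R n W -> @open_Sc R K v q n (@phi R K v q n @` W).
Proof.
move=> [WA hW]; split.
  by move=> C [p Wp <-]; exact: Sc_phi (WA _ Wp).
split; first by move=> g [].
move=> g [sg [p Wp ep]].
have pe : p = psi g.
  by apply: phi_inj; [exact: WA | exact: psi_Abar | rewrite ep phi_psi].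
have [B [bB [Bp BW]]] := hW p Wp.
suff [dl [M [dl0 key]]] : exists dl M : R, 0 < dl /\ forall g', Scp v q g' ->
    hJ g \subset hJ g' -> (forall i, i \in hJ g -> `|hy g' i - hy g i| < dl) ->
    (forall i, i \in hJ g' -> i \notin hJ g -> M < hy g' i) -> B (psi g').
  have [Os [hO hU]] := @nbhd_psi g dl M sg dl0.
  exists n, (@bas K n), Os; split => // g' sg' hg'.
  have [h1 h2 h3] := hU g' sg' hg'.
  split => //; exists (psi g'); first exact: BW (key g' sg' h1 h2 h3).
  exact: phi_psi.
case: bB => [[BA hB]|[I [U [Ine IT oU bU eB]]]].
  have [e [e0 he]] := hB p Bp.
  have [Ap pT] := BA p Bp.
  exists (e / 3), 0; split; first by rewrite divr_gt0.
  move=> g' sg' sJ hcl _.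
  have JT : hJ g = [set: 'I_n]%SET by rewrite -pT pe.
  have J'T : hJ g' = [set: 'I_n]%SET by apply/eqP; rewrite finset.eqEsubset finset.subsetT -JT.
  apply: he; first by split; [exact: psi_Abar|].
  move=> i; rewrite pe /= J'T JT.
  have := @nrm_close [set: 'I_n]%SET (hy g') (hy g) (e / 3) _ _ i.
  rewrite mulr2n => h; apply: lt_trans (h _ _) _.
  - by rewrite -JT; case: (@psi_Abar _ sg).
  - by move=> j _; apply: hcl; rewrite JT inE.
  - lra.
subst B.
move: Bp => [Ap [J1 [sI eJ1 [u0 [Uu0 [t0 [t00 t0I e0']]]]]]].
have [e [e0 he]] := oU.2 u0 Uu0.
have [[u0ne u0n] u0T] := oU.1 u0 Uu0.
have eJ0 : J1 = hJ g by rewrite -eJ1 pe.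
have p2 : p.2 = nrm (hJ g) (hy g) by rewrite pe.
pose c := mean (hJ g) (hy g) - mean (hJ g) (fun i => u0.2 i + t0 i).
have hyc i : i \in hJ g -> hy g i = u0.2 i + t0 i + c.
  move=> iJ; have := congr1 (fun f => f i) (etrans (esym p2) e0').
  rewrite /= eJ0 !nrmE iJ /c; lra.
pose M := c + \big[Num.max/0]_(i < n) `|u0.2 i|.
exists (e / 3), M; split; first by rewrite divr_gt0.
move=> g' sg' sJ hcl hM.
pose w := fun i => if i \in hJ g then hy g' i - c - t0 i else u0.2 i.
pose t := fun i => if i \in hJ g then t0 i else if i \in hJ g' then hy g' i - c - u0.2 i else 0.
have neT : [set: 'I_n]%SET != finset.set0 by rewrite -u0T.
split; first exact: psi_Abar.
exists (hJ g'); split => //.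
  by apply: fintype.subset_trans sJ; rewrite -eJ0.
exists ([set: 'I_n]%SET, nrm [set: 'I_n]%SET w); split.
  apply: he; first by split => //; split => //=; rewrite nrm_idem.
  move=> i; have -> : u0.2 i = nrm [set: 'I_n]%SET u0.2 i by rewrite {1}u0n u0T.
  have := @nrm_close [set: 'I_n]%SET w u0.2 (e / 3) neT _ i.
  rewrite mulr2n => h; apply: lt_trans (h _) _; last lra.
  move=> j _; rewrite /w; case: ifP => jJ.
    have := hcl j jJ; rewrite (hyc j jJ).
    by have -> : hy g' j - c - t0 j - u0.2 j = hy g' j - (u0.2 j + t0 j + c) by ring.
  by rewrite subrr normr0; lra.
exists t; split.
- move=> i; rewrite /t; case: ifP => iJ0; first exact: t00.
  case: ifP => iJ' //.
  have := hM i iJ' (negbT iJ0); have := le_bigmax 0 (fun i => `|u0.2 i|) i.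
  have := ler_norm (u0.2 i); rewrite /M; lra.
- move=> i iI; rewrite /t.
  have iJ0 : i \in hJ g by rewrite -eJ0; exact: (fintype.subsetP sI).
  by rewrite iJ0; exact: t0I.
- rewrite /=; symmetry.
  rewrite (@nrm_eq_on (hJ g') _ (fun i => (w i + t i) + - mean [set: 'I_n]%SET w)); last first.
    by move=> i _; rewrite nrmE inE; ring.
  rewrite nrm_shift (@nrm_eq_on (hJ g') _ (fun i => hy g' i + - c)); first by rewrite nrm_shift.
  move=> i iJ'; rewrite /w /t; case: ifP => iJ0; first ring.
  by rewrite iJ'; ring.
Qed.

End Basic.
Theorem proposition3p2 (R : realType) (K : fieldType) (v : K -> int) (q : nat)
    (n : nat) :
  nonarch_local_field R v q ->
  (* phi : Abar -> S_c is a bijection ... *)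
  ((forall p, @Abar R n p -> Sc v q (@phi R K v q n p)) /\
   (forall p p', @Abar R n p -> @Abar R n p' ->
      @phi R K v q n p = @phi R K v q n p' -> p = p') /\
   (forall C, @Sc R K v q n C -> exists p, @Abar R n p /\ @phi R K v q n p = C)) /\
  (* ... which is continuous ... *)
  (forall W, @open_Sc R K v q n W ->
     @open_Abar R n (@Abar R n `&` @phi R K v q n @^-1` W)) /\
  (* ... and open, hence a homeomorphism ... *)
  (forall W, @open_Abar R n W -> @open_Sc R K v q n (@phi R K v q n @` W)) /\
  (* ... and N-equivariant. *)
  (forall (d : 'rV[K]_n) (s : 'S_n), (forall j, d 0 j != 0) ->
     forall p, @Abar R n p ->
       @phi R K v q n (@actA R K v n d s p) = @actS R K n d s (@phi R K v q n p)).
Proof.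
move=> HL; split; [split; [|split]|split; [|split]].
- by move=> p Ap; exact: (@Sc_phi R K v q HL n p Ap).
- by move=> p p' Ap Ap' e; exact: (@phi_inj R K v q HL n p p' Ap Ap' e).
- move=> C [g [sg ->]]; exists (psi R K q n g); split.
    exact: (@psi_Abar R K v q HL n g sg).
  exact: (@phi_psi R K v q HL n g sg).
- by move=> W oW; exact: (@cont_phi R K v q HL n W oW).
- by move=> W oW; exact: (@open_phi R K v q HL n W oW).
- by move=> d s d0 p Ap; exact: (@equiv R K v q HL n d s p d0 Ap).
Qed.
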